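(* (Explicit Rayleigh's Monotonicity Law II.) Let $\Gamma$ be a metrized graph, let $e_i$ be an edge of $\Gamma$ with end points $p_i,q_i$ and length $L_i$, and let $\Gamma'$ be the metrized graph obtained from $\Gamma$ by replacing $e_i$ by an edge $e_i'$ with the same end points and length $L_i'>0$. For $s,t\in\Gamma-e_i$: if $e_i$ is not a bridge, $$r(s,t)=r_{\Gamma'}(s,t)+\frac{L_i-L_i'}{(L_i+R_i)(L_i'+R_i)}\big(j^{\Gamma-e_i}_{p_i}(q_i,s)-j^{\Gamma-e_i}_{p_i}(q_i,t)\big)^2 .$$ If $e_i$ is a bridge, then $r(s,t)=r_{\Gamma'}(s,t)$ when $s,t$ lie in the same connected component of $\Gamma-e_i$, and $r(s,t)=r_{\Gamma'}(s,t)+L_i-L_i'$ otherwise. In particular, if $e_i$ is not a bridge and $L_i>L_i'$, then $r(s,t)\ge r_{\Gamma'}(s,t)$ with equality iff $j^{\Gamma-e_i}_{p_i}(q_i,s)=j^{\Gamma-e_i}_{p_i}(q_i,t)$; if $e_i$ is a bridge and $L_i>L_i'$, then $r(s,t)\ge r_{\Gamma'}(s,t)$ with equality iff $s$ and $t$ are in the same connected component of $\Gamma-e_i$.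
   Context: A metrized graph $\Gamma$ is a finite connected graph (multiple edges and self-loops allowed) in which each edge is identified with a closed line segment of positive length. $\Gamma$ is regarded as a resistive electric circuit in which each edge is a resistor whose resistance equals its length. $r(x,y)$ is the effective resistance; $j_z(x,y)$ is the voltage at $x$ when a unit current enters at $y$ and exits at $z$, with reference voltage $0$ at $z$. $\Gamma-e_i$ is obtained by deleting the interior of $e_i$; $e_i$ is a bridge if $\Gamma-e_i$ is disconnected; for non-bridge $e_i$, $R_i:=r_{\Gamma-e_i}(p_i,q_i)$, and $j^{\Gamma-e_i}$ is the voltage function on $\Gamma-e_i$. *)

(* Defs.v *)
(* A metrized graph is given by a finite model:
   vertices V, edges E (multi-edges and self-loops allowed), end points
   p e, q e, and positive lengths L e (= resistances). *)
From mathcomp Require Import all_boot all_order all_algebra.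
From Stdlib Require Import ClassicalEpsilon.
Set Implicit Arguments. Unset Strict Implicit. Unset Printing Implicit Defensive.
Import Order.TTheory GRing.Theory Num.Theory.
Local Open Scope ring_scope.

Section Network.
Variables (R : realFieldType) (V E : finType) (p q : E -> V).

Definition adj (A : {set E}) : rel V := fun x y =>
  [exists e in A, ((p e == x) && (q e == y)) || ((p e == y) && (q e == x))].

Definition connected_net (A : {set E}) : Prop := forall x y : V, connect (adj A) x y.

Definition netout (A : {set E}) (L : E -> R) (f : V -> R) (v : V) : R :=
  \sum_(e in A) ((if p e == v then (f v - f (q e)) / L e else 0)
               + (if q e == v then (f v - f (p e)) / L e else 0)).

(* f is the voltage when a unit current enters at y and exits at z,
   with reference voltage 0 at z *)
Definition is_voltage (A : {set E}) (L : E -> R) (z y : V) (f : V -> R) : Prop :=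
  f z = 0 /\ forall v, netout A L f v = (v == y)%:R - (v == z)%:R.

(* the voltage function (unique when the network is connected) *)
Definition voltage (A : {set E}) (L : E -> R) (z y : V) : V -> R :=
  epsilon (inhabits (fun _ => 0)) (is_voltage A L z y).

(* j_z(x,y) : voltage at x, unit current entering at y, exiting at z *)
Definition jfun (A : {set E}) (L : E -> R) (z x y : V) : R := voltage A L z y x.

Definition resist (A : {set E}) (L : E -> R) (x y : V) : R := jfun A L y x x.

End Network.

(* Main.v *)
Require Import Defs.
From mathcomp Require Import all_boot all_order all_algebra.
From Stdlib Require Import ClassicalEpsilon.
From mathcomp Require Import ring lra.
Set Implicit Arguments. Unset Strict Implicit. Unset Printing Implicit Defensive.
Import Order.TTheory GRing.Theory Num.Theory.
Local Open Scope ring_scope.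

Lemma netout_ext (R : realFieldType) (V E : finType) (p q : E -> V)
  (A : {set E}) (L M : E -> R) (f g : V -> R) v :
  (forall e, e \in A -> L e = M e) -> (forall x, f x = g x) ->
  netout p q A L f v = netout p q A M g v.
Proof.
move=> HL Hf; rewrite /netout; apply: eq_bigr => e eA.
by rewrite !Hf HL.
Qed.

Lemma netoutD (R : realFieldType) (V E : finType) (p q : E -> V)
  (A : {set E}) (L : E -> R) (f g : V -> R) v :
  netout p q A L (fun x => f x + g x) v = netout p q A L f v + netout p q A L g v.
Proof.
rewrite /netout -big_split /=; apply: eq_bigr => e _.
case: (p e == v); case: (q e == v); rewrite ?addr0 ?add0r; ring.
Qed.

Lemma netoutZ (R : realFieldType) (V E : finType) (p q : E -> V)
  (A : {set E}) (L : E -> R) (c : R) (f : V -> R) v :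
  netout p q A L (fun x => c * f x) v = c * netout p q A L f v.
Proof.
rewrite /netout mulr_sumr; apply: eq_bigr => e _.
case: (p e == v); case: (q e == v); ring.
Qed.

Lemma netout0 (R : realFieldType) (V E : finType) (p q : E -> V)
  (A : {set E}) (L : E -> R) (f : V -> R) v :
  (forall e, e \in A -> f (p e) = f (q e)) -> netout p q A L f v = 0.
Proof.
move=> H; rewrite /netout big1 // => e eA.
case: ifP => [/eqP Hp|_]; case: ifP => [/eqP Hq|_].
- by subst v; rewrite Hq; ring.
- by rewrite -Hp H //; ring.
- by rewrite -Hq -H //; ring.
- by rewrite addr0.
Qed.

Lemma netout_sum (R : realFieldType) (V E I : finType) (p q : E -> V)
  (A : {set E}) (L : E -> R) (F : I -> V -> R) v :
  netout p q A L (fun x => \sum_i F i x) v = \sum_i netout p q A L (F i) v.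
Proof.
rewrite /netout exchange_big /=; apply: eq_bigr => e _.
have E1 : forall (b : bool) x y, (if b then (\sum_i F i x - \sum_i F i y) / L e else 0)
   = \sum_i (if b then (F i x - F i y) / L e else 0).
  by move=> [] x y; [rewrite -sumrB mulr_suml | rewrite big1].
by rewrite !E1 -big_split.
Qed.

Lemma sum_ind (R : realFieldType) (V : finType) (F : V -> R) y :
  \sum_v F v * (v == y)%:R = F y.
Proof.
rewrite (bigD1 y) //= eqxx mulr1 big1 ?addr0 // => v /negbTE ->; by rewrite mulr0.
Qed.

Lemma energy (R : realFieldType) (V E : finType) (p q : E -> V)
  (A : {set E}) (L : E -> R) (f g : V -> R) :
  \sum_v f v * netout p q A L g v =
  \sum_(e in A) (f (p e) - f (q e)) * (g (p e) - g (q e)) / L e.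
Proof.
rewrite /netout.
under eq_bigr do rewrite mulr_sumr.
rewrite exchange_big /=; apply: eq_bigr => e _.
have H1 : \sum_v f v * (if p e == v then (g v - g (q e)) / L e else 0)
   = f (p e) * ((g (p e) - g (q e)) / L e).
  rewrite (bigD1 (p e)) //= eqxx big1 ?addr0 // => v /negbTE.
  by rewrite eq_sym => ->; rewrite mulr0.
have H2 : \sum_v f v * (if q e == v then (g v - g (p e)) / L e else 0)
   = f (q e) * ((g (q e) - g (p e)) / L e).
  rewrite (bigD1 (q e)) //= eqxx big1 ?addr0 // => v /negbTE.
  by rewrite eq_sym => ->; rewrite mulr0.
under eq_bigr do rewrite mulrDr.
rewrite big_split /= H1 H2; ring.
Qed.

Lemma sum_netout (R : realFieldType) (V E : finType) (p q : E -> V)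
  (A : {set E}) (L : E -> R) (g : V -> R) :
  \sum_v netout p q A L g v = 0.
Proof.
transitivity (\sum_v (fun _ => (1:R)) v * netout p q A L g v).
  by apply: eq_bigr => v _; rewrite mul1r.
rewrite energy big1 // => e _; rewrite subrr !mul0r //.
Qed.

Lemma netoutB (R : realFieldType) (V E : finType) (p q : E -> V)
  (A : {set E}) (L : E -> R) (f g : V -> R) v :
  netout p q A L (fun x => f x - g x) v = netout p q A L f v - netout p q A L g v.
Proof.
rewrite /netout -sumrB /=; apply: eq_bigr => e _.
case: (p e == v); case: (q e == v); ring.
Qed.

Lemma harmonic_const (R : realFieldType) (V E : finType) (p q : E -> V)
  (A : {set E}) (L : E -> R) (HL : forall e, 0 < L e)
  (Hc : connected_net p q A) (h : V -> R)
  (Hh : forall v, netout p q A L h v = 0) : forall x y, h x = h y.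
Proof.
have E0 : \sum_(e in A) (h (p e) - h (q e)) * (h (p e) - h (q e)) / L e = 0.
  by rewrite -energy big1 // => v _; rewrite Hh mulr0.
have Hedge : forall e, e \in A -> h (p e) = h (q e).
  move=> e eA; have := psumr_eq0P _ E0 eA.
  move=> /(_ _)/eqP; rewrite mulf_eq0 invr_eq0 (gt_eqF (HL e)) orbF mulf_eq0 orbb subr_eq0.
  move=> H; apply/eqP/H => i _; rewrite -expr2; apply: divr_ge0; [exact: sqr_ge0|exact: ltW].
move=> x y.
have Hcl : closed (adj p q A) [pred w | h w == h x].
  move=> u w /existsP [e /andP [eA /orP [/andP [/eqP <- /eqP <-]|/andP [/eqP <- /eqP <-]]]];
  by rewrite !inE Hedge.
have := closed_connect Hcl (Hc x y); rewrite !inE eqxx => /esym/eqP.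
by move=> ->.
Qed.

Lemma voltage_unique (R : realFieldType) (V E : finType) (p q : E -> V)
  (A : {set E}) (L : E -> R) (HL : forall e, 0 < L e)
  (Hc : connected_net p q A) z y (f g : V -> R) :
  is_voltage p q A L z y f -> is_voltage p q A L z y g -> forall x, f x = g x.
Proof.
move=> [fz Hf] [gz Hg] x.
have Hh : forall v, netout p q A L (fun x => f x - g x) v = 0.
  by move=> v; rewrite netoutB Hf Hg subrr.
have := harmonic_const HL Hc Hh x z; rewrite fz gz subrr => /eqP.
by rewrite subr_eq0 => /eqP.
Qed.

Lemma reciprocity (R : realFieldType) (V E : finType) (p q : E -> V)
  (A : {set E}) (L : E -> R) z1 y1 z2 y2 (a b : V -> R) :
  is_voltage p q A L z1 y1 a -> is_voltage p q A L z2 y2 b ->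
  a y2 - a z2 = b y1 - b z1.
Proof.
move=> [_ Ha] [_ Hb].
have H1 : \sum_v a v * netout p q A L b v = a y2 - a z2.
  under eq_bigr do rewrite Hb mulrBr.
  by rewrite sumrB !sum_ind.
have H2 : \sum_v b v * netout p q A L a v = b y1 - b z1.
  under eq_bigr do rewrite Ha mulrBr.
  by rewrite sumrB !sum_ind.
rewrite -H1 -H2 !energy; apply: eq_bigr => e _; ring.
Qed.

Lemma voltage_exists (R : realFieldType) (V E : finType) (p q : E -> V)
  (A : {set E}) (L : E -> R) (HL : forall e, 0 < L e)
  (Hc : connected_net p q A) z y : exists f, is_voltage p q A L z y f.
Proof.
pose Phi (f : V -> R) v := if v == z then f z else netout p q A L f v.
pose d (j : 'I_#|V|) (x : V) : R := (enum_rank x == j)%:R.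
pose M : 'M[R]_#|V| := \matrix_(j, i) Phi (d j) (enum_val i).
pose fu (u : 'rV[R]_#|V|) x := u 0 (enum_rank x).
have Hfu : forall u x, fu u x = \sum_j u 0 j * d j x.
  move=> u x; rewrite /fu /d (bigD1 (enum_rank x)) //= eqxx mulr1 big1 ?addr0 //.
  by move=> j /negbTE; rewrite eq_sym => ->; rewrite mulr0.
have HPhi : forall u i, Phi (fu u) (enum_val i) = (u *m M) 0 i.
  move=> u i; rewrite mxE /Phi /M.
  under [RHS]eq_bigr do rewrite mxE.
  rewrite /Phi; case: (enum_val i == z); first by rewrite Hfu.
  rewrite (@netout_ext _ _ _ p q A L L _ (fun x => \sum_j u 0 j * d j x)) //.
  by rewrite netout_sum; apply: eq_bigr => j _; rewrite netoutZ.
have Hinj : forall u : 'rV[R]_#|V|, u *m M = 0 -> u = 0.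
  move=> u Hu.
  have H0 : forall v, Phi (fu u) v = 0.
    by move=> v; rewrite -(enum_rankK v) HPhi Hu mxE.
  have Hz : fu u z = 0 by have := H0 z; rewrite /Phi eqxx.
  have Hne : forall v, v != z -> netout p q A L (fu u) v = 0.
    by move=> v /negbTE Hv; have := H0 v; rewrite /Phi Hv.
  have Hh : forall v, netout p q A L (fu u) v = 0.
    move=> v; case: (eqVneq v z) => [->|/Hne //].
    have := sum_netout p q A L (fu u); rewrite (bigD1 z) //= big1 ?addr0 //.
  apply/rowP => j; rewrite mxE.
  have := harmonic_const HL Hc Hh (enum_val j) z.
  by rewrite Hz /fu enum_valK.
have Hfree : row_free M.
  rewrite -kermx_eq0; apply/eqP/row_matrixP => i; rewrite row0; apply: Hinj.
  by rewrite -row_mul mulmx_ker row0.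
have HU : M \in unitmx by rewrite -row_free_unit.
pose b v : R := if v == z then 0 else (v == y)%:R - (v == z)%:R.
pose u := (\row_i b (enum_val i)) *m invmx M.
exists (fu u).
have HB : forall v, Phi (fu u) v = b v.
  by move=> v; rewrite -(enum_rankK v) HPhi /u mulmxKV // mxE.
split; first by have := HB z; rewrite /Phi /b eqxx.
have Hne : forall v, v != z -> netout p q A L (fu u) v = (v==y)%:R - (v==z)%:R.
  by move=> v Hv; have := HB v; rewrite /Phi /b (negbTE Hv).
move=> v; case: (eqVneq v z) => [->|Hv]; last by rewrite Hne // (negbTE Hv).
have S1 := sum_netout p q A L (fu u).
have S2 : \sum_v ((v==y)%:R - (v==z)%:R : R) = 0.
  transitivity (\sum_v (1:R) * (v==y)%:R - \sum_v (1:R) * (v==z)%:R).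
    by rewrite -sumrB; apply: eq_bigr => w _; rewrite !mul1r.
  by rewrite !sum_ind subrr.
rewrite (bigD1 z) //= in S1; rewrite (bigD1 z) //= in S2.
have Hr : \sum_(w | w != z) netout p q A L (fu u) w
        = \sum_(w | w != z) ((w==y)%:R - (w==z)%:R : R).
  by apply: eq_bigr => w; apply: Hne.
move: S1; rewrite Hr => S1; rewrite eqxx in S2 *.
apply: (addIr (\sum_(w | w != z) ((w==y)%:R - (w==z)%:R : R))).
by rewrite S1 S2.
Qed.

Lemma voltage_spec (R : realFieldType) (V E : finType) (p q : E -> V)
  (A : {set E}) (L : E -> R) (HL : forall e, 0 < L e)
  (Hc : connected_net p q A) z y : is_voltage p q A L z y (voltage p q A L z y).
Proof. by rewrite /voltage; apply: epsilon_spec; exact: voltage_exists. Qed.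

Lemma voltage_eq (R : realFieldType) (V E : finType) (p q : E -> V)
  (A : {set E}) (L : E -> R) (HL : forall e, 0 < L e)
  (Hc : connected_net p q A) z y f :
  is_voltage p q A L z y f -> forall x, voltage p q A L z y x = f x.
Proof. by move=> Hf; exact: (voltage_unique HL Hc (voltage_spec HL Hc z y) Hf). Qed.

Lemma volt_ge0 (R : realFieldType) (V E : finType) (p q : E -> V)
  (A : {set E}) (L : E -> R) (HL : forall e, 0 < L e) z y f :
  is_voltage p q A L z y f -> 0 <= f y.
Proof.
move=> [fz Hf].
have H1 : \sum_v f v * netout p q A L f v = f y - f z.
  under eq_bigr do rewrite Hf mulrBr.
  by rewrite sumrB !sum_ind.
move: H1; rewrite fz subr0 energy => <-.
apply: sumr_ge0 => e _; rewrite -expr2; apply: divr_ge0; [exact: sqr_ge0|exact: ltW].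
Qed.

Lemma term_eq (R : realFieldType) (V : finType) (f : V -> R) (a b v : V) (Lx : R) :
  (if a == v then (f v - f b) / Lx else 0) + (if b == v then (f v - f a) / Lx else 0)
  = ((v == a)%:R - (v == b)%:R) * ((f a - f b) / Lx).
Proof.
rewrite (eq_sym v a) (eq_sym v b).
have [->|Hav] := eqVneq a v; have [->|Hbv] := eqVneq b v; rewrite /=; ring.
Qed.

Lemma netout_split (R : realFieldType) (V E : finType) (p q : E -> V)
  (L : E -> R) (f : V -> R) ei v :
  netout p q [set: E] L f v =
  ((v == p ei)%:R - (v == q ei)%:R) * ((f (p ei) - f (q ei)) / L ei)
  + netout p q ([set: E] :\ ei) L f v.
Proof. by rewrite /netout (big_setD1 ei) ?inE // term_eq. Qed.

Lemma nonbridge_r (R : realFieldType) (V E : finType) (p q : E -> V)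
  (L : E -> R) (HL : forall e, 0 < L e) (ei : E)
  (Hconn : connected_net p q [set: E])
  (Hc' : connected_net p q ([set: E] :\ ei)) (Lx : R) (HLx : 0 < Lx)
  (M : E -> R) (HM : forall e, M e = if e == ei then Lx else L e) (s t : V) :
  voltage p q [set: E] M t s s =
  voltage p q ([set: E] :\ ei) L t s s
  - (voltage p q ([set: E] :\ ei) L (p ei) (q ei) s
     - voltage p q ([set: E] :\ ei) L (p ei) (q ei) t) ^+ 2
    / (Lx + voltage p q ([set: E] :\ ei) L (p ei) (q ei) (q ei)).
Proof.
set A' := [set: E] :\ ei.
set g := voltage p q A' L t s.
set h := voltage p q A' L (p ei) (q ei).
have HM0 : forall e, 0 < M e by move=> e; rewrite HM; case: (e == ei).
have Hg := voltage_spec HL Hc' t s; rewrite -/g in Hg.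
have Hh := voltage_spec HL Hc' (p ei) (q ei); rewrite -/h in Hh.
have R0ge := volt_ge0 HL Hh.
have HLR : Lx + h (q ei) != 0 by apply: lt0r_neq0; apply: ltr_pwDl.
have Hrec := reciprocity Hg Hh.
have hp : h (p ei) = 0 by case: Hh.
have gt : g t = 0 by case: Hg.
set D := h s - h t.
set I := - D / (Lx + h (q ei)).
pose f x := g x + I * (h x - h t).
have Hf : is_voltage p q [set: E] M t s f.
  split; first by rewrite /f gt subrr mulr0 addr0.
  move=> v; rewrite (netout_split _ _ _ _ ei) HM eqxx.
  have -> : netout p q A' M f v = netout p q A' L f v.
    by apply: netout_ext => // e; rewrite !inE HM => /andP [/negbTE -> _].
  rewrite (@netout_ext _ _ _ p q A' L L f (fun x => g x + I * (h x - h t))) //.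
  rewrite netoutD netoutZ netoutB (@netout0 _ _ _ p q A' L (fun _ => h t)) //.
  case: Hg => _ ->; case: Hh => _ ->.
  have Hpq : f (p ei) - f (q ei) = I * Lx.
    rewrite /f hp.
    have -> : g (p ei) = g (q ei) - D by rewrite /D -Hrec; ring.
    rewrite /I; field; exact: HLR.
  rewrite Hpq mulfK ?lt0r_neq0 //; ring.
rewrite (voltage_eq (HM0) Hconn Hf) /f /I -/D; field; exact: HLR.
Qed.

Lemma adj_sym (V E : finType) (p q : E -> V) (A : {set E}) :
  symmetric (adj p q A).
Proof.
move=> x y; rewrite /adj; apply: eq_existsb => e; by rewrite (orbC (_ && _)).
Qed.

Lemma adj_edge (V E : finType) (p q : E -> V) (A : {set E}) e :
  e \in A -> adj p q A (p e) (q e) /\ adj p q A (q e) (p e).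
Proof.
move=> eA; split; apply/existsP; exists e; by rewrite eA !eqxx ?orbT.
Qed.

Lemma conn_sym (V E : finType) (p q : E -> V) (A : {set E}) x y :
  connect (adj p q A) x y = connect (adj p q A) y x.
Proof. exact: (sym_connect_sym (adj_sym p q A)). Qed.

Lemma bridge_cover (V E : finType) (p q : E -> V) ei
  (Hconn : connected_net p q [set: E]) v :
  connect (adj p q ([set: E] :\ ei)) (p ei) v
  || connect (adj p q ([set: E] :\ ei)) (q ei) v.
Proof.
set A' := [set: E] :\ ei.
pose a := [pred w | connect (adj p q A') (p ei) w || connect (adj p q A') (q ei) w].
have Hcl : closed (adj p q [set: E]) a.
  move=> x y /existsP [e /andP [_ He]].
  rewrite !inE.
  case: (eqVneq e ei) => [Hee|Hne].
    subst e.
    by move: He => /orP [/andP [/eqP <- /eqP <-] | /andP [/eqP <- /eqP <-]];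
      rewrite !connect0 ?orbT.
  have eA : e \in A' by rewrite !inE Hne.
  have Hxy : adj p q A' x y by apply/existsP; exists e; rewrite eA He.
  have Hyx : adj p q A' y x by rewrite adj_sym.
  have Heq : forall w, connect (adj p q A') w x = connect (adj p q A') w y.
    move=> w; apply/idP/idP => H; apply: connect_trans H _; exact: connect1.
  by rewrite !Heq.
have H := closed_connect Hcl (Hconn (p ei) v).
have : p ei \in a by rewrite inE connect0.
by rewrite H.
Qed.

Lemma bridge_pq (V E : finType) (p q : E -> V) ei
  (Hconn : connected_net p q [set: E])
  (Hnc : ~ connected_net p q ([set: E] :\ ei)) :
  ~~ connect (adj p q ([set: E] :\ ei)) (p ei) (q ei).
Proof.
apply/negP => Hpq; apply: Hnc => x y.
have Hp : forall w, connect (adj p q ([set: E] :\ ei)) (p ei) w.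
  move=> w; case/orP: (bridge_cover ei Hconn w) => // H; exact: connect_trans Hpq H.
apply: connect_trans (Hp y); rewrite conn_sym; exact: Hp.
Qed.

Lemma K_closed (V E : finType) (p q : E -> V) (A : {set E}) x e :
  e \in A -> connect (adj p q A) x (p e) = connect (adj p q A) x (q e).
Proof.
move=> eA; have [H1 H2] := adj_edge p q eA.
by apply/idP/idP => H; apply: connect_trans H (connect1 _).
Qed.

Lemma K_conn (V E : finType) (p q : E -> V) ei
  (Hconn : connected_net p q [set: E]) s t :
  (connect (adj p q ([set: E] :\ ei)) (p ei) s
   == connect (adj p q ([set: E] :\ ei)) (p ei) t)
  = connect (adj p q ([set: E] :\ ei)) s t.
Proof.
set A' := [set: E] :\ ei.
apply/idP/idP.
- move=> /eqP Heq; case Hs: (connect (adj p q A') (p ei) s).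
    have Ht : connect (adj p q A') (p ei) t by rewrite -Heq.
    by apply: connect_trans Ht; rewrite conn_sym.
  have Hqs := bridge_cover ei Hconn s; rewrite -/A' Hs /= in Hqs.
  have Hqt := bridge_cover ei Hconn t; rewrite -/A' -Heq Hs /= in Hqt.
  by apply: connect_trans Hqt; rewrite conn_sym.
- move=> Hst; apply/eqP; apply/idP/idP => H; first exact: connect_trans H Hst.
  by apply: connect_trans H _; rewrite conn_sym.
Qed.

Lemma bridge_r (R : realFieldType) (V E : finType) (p q : E -> V)
  (L : E -> R) (HL : forall e, 0 < L e) (ei : E)
  (Hconn : connected_net p q [set: E])
  (Hnc : ~ connected_net p q ([set: E] :\ ei)) (Lx : R) (HLx : 0 < Lx)
  (M : E -> R) (HM : forall e, M e = if e == ei then Lx else L e) (s t : V) :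
  voltage p q [set: E] M t s s =
  voltage p q [set: E] L t s s + (Lx - L ei) *
   ((connect (adj p q ([set: E] :\ ei)) (p ei) s)%:R
    - (connect (adj p q ([set: E] :\ ei)) (p ei) t)%:R) ^+ 2.
Proof.
set A' := [set: E] :\ ei.
have HM0 : forall e, 0 < M e by move=> e; rewrite HM; case: (e == ei).
set f := voltage p q [set: E] L t s.
have Hf := voltage_spec HL Hconn t s; rewrite -/f in Hf.
case: Hf => ft Hf.
pose chi v : R := (connect (adj p q A') (p ei) v)%:R.
set I := chi s - chi t.
have Hchi : forall e, e \in A' -> chi (p e) = chi (q e).
  by move=> e eA; rewrite /chi (K_closed _ _ _ eA).
have chip : chi (p ei) = 1 by rewrite /chi connect0.
have chiq : chi (q ei) = 0 by rewrite /chi (negbTE (bridge_pq Hconn Hnc)).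
have HI : (f (p ei) - f (q ei)) / L ei = I.
  have E1 : \sum_v chi v * netout p q [set: E] L f v = I.
    under eq_bigr do rewrite Hf mulrBr.
    by rewrite sumrB !sum_ind.
  rewrite -E1 energy (big_setD1 ei) ?inE // chip chiq big1 ?addr0 => [|e eA].
    by rewrite /= subr0 mul1r addr0.
  by rewrite Hchi // subrr !mul0r.
pose c := Lx - L ei.
pose f' x := f x + c * I * (chi x - chi t).
have Hf' : is_voltage p q [set: E] M t s f'.
  split; first by rewrite /f' ft subrr mulr0 addr0.
  move=> v; rewrite -(Hf v) !(netout_split _ _ _ _ ei) HM eqxx.
  have -> : netout p q A' M f' v = netout p q A' L f v.
    rewrite (@netout_ext _ _ _ p q A' M L f' (fun x => f x + c * I * (chi x - chi t))) => [|e|//]; last first.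
      by rewrite !inE HM => /andP [/negbTE -> _].
    rewrite netoutD netoutZ (@netout0 _ _ _ p q A' L (fun x => chi x - chi t)) ?mulr0 ?addr0 //.
    by move=> e eA; rewrite Hchi.
  have Hpq : f' (p ei) - f' (q ei) = I * Lx.
    rewrite /f' chip chiq.
    have -> : f (p ei) = f (q ei) + I * L ei.
      by rewrite -HI; field; apply: lt0r_neq0.
    rewrite /c; ring.
  by rewrite Hpq mulfK ?lt0r_neq0 // HI.
rewrite (voltage_eq HM0 Hconn Hf') /f' /I /c /chi; ring.
Qed.

Theorem theorem3p10 (R : realFieldType) (V E : finType) (p q : E -> V)
    (L : E -> R) (ei : E) (Li' : R) (s t : V)
    (HL : forall e, 0 < L e) (Hconn : connected_net p q [set: E])
    (HLi' : 0 < Li') :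
  let Li := L ei in
  let L' := fun e => if e == ei then Li' else L e in
  let A' := [set: E] :\ ei in
  let r := resist p q [set: E] L in
  let r' := resist p q [set: E] L' in
  let Ri := resist p q A' L (p ei) (q ei) in
  let jr := jfun p q A' L (p ei) (q ei) in
  (connected_net p q A' ->
     r s t = r' s t + (Li - Li') / ((Li + Ri) * (Li' + Ri)) * (jr s - jr t) ^+ 2)
  /\ (~ connected_net p q A' ->
        (connect (adj p q A') s t -> r s t = r' s t)
     /\ (~ connect (adj p q A') s t -> r s t = r' s t + Li - Li'))
  /\ (connected_net p q A' -> Li' < Li ->
        r' s t <= r s t /\ (r s t = r' s t <-> jr s = jr t))
  /\ (~ connected_net p q A' -> Li' < Li ->
        r' s t <= r s t /\ (r s t = r' s t <-> connect (adj p q A') s t)).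
Proof.
move=> Li L' A' r r' Ri jr.
have HM' : forall e, L' e = if e == ei then Li' else L e by [].
have HML : forall e, L e = if e == ei then L ei else L e.
  by move=> e; case: eqP => // ->.
have HLi : 0 < Li by exact: HL.
have NB : connected_net p q A' ->
   r s t = r' s t + (Li - Li') / ((Li + Ri) * (Li' + Ri)) * (jr s - jr t) ^+ 2
   /\ 0 <= Ri.
  move=> Hc'.
  have E1 := nonbridge_r HL Hconn Hc' (HL ei) HML s t.
  have E2 := nonbridge_r HL Hconn Hc' HLi' HM' s t.
  set h := voltage p q A' L (p ei) (q ei) in E1 E2.
  have Hh := voltage_spec HL Hc' (p ei) (q ei); rewrite -/h in Hh.
  have hp : h (p ei) = 0 by case: Hh.
  have rjr : forall x, jr x = h x.
    move=> x; have Ha := voltage_spec HL Hc' (p ei) x.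
    have := reciprocity Ha Hh; rewrite hp subr0.
    case: Ha => -> _; rewrite subr0 => <-; by [].
  have Ha := voltage_spec HL Hc' (q ei) (p ei).
  have RiE : Ri = h (q ei).
    have [Ha0 _] := Ha.
    have := reciprocity Ha Hh; rewrite hp Ha0 !sub0r => /oppr_inj.
    by rewrite /Ri /resist /jfun.
  have Rige : 0 <= Ri.
    by have := volt_ge0 HL Ha; rewrite /Ri /resist /jfun.
  split=> //.
  rewrite /r /r' /resist /jfun E1 E2 !rjr RiE -/h.
  rewrite RiE in Rige.
  have H1 : Li + h (q ei) != 0 by apply: lt0r_neq0; lra.
  have H2 : Li' + h (q ei) != 0 by apply: lt0r_neq0; lra.
  rewrite /Li; field.
  by rewrite /Li in H1; rewrite H1 H2.
have BR : ~ connected_net p q A' ->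
   r' s t = r s t + (Li' - Li) *
   ((connect (adj p q A') (p ei) s)%:R - (connect (adj p q A') (p ei) t)%:R) ^+ 2.
  move=> Hnc; exact: (bridge_r HL Hconn Hnc HLi' HM' s t).
have KC := K_conn ei Hconn s t; rewrite -/A' in KC.
split; first by move=> Hc; case: (NB Hc).
split.
  move=> Hnc; have E2 := BR Hnc; split => Hst.
    have Heq : connect (adj p q A') (p ei) s = connect (adj p q A') (p ei) t.
      by apply/eqP; rewrite KC.
    rewrite E2 Heq; ring.
  have Hne : connect (adj p q A') (p ei) s != connect (adj p q A') (p ei) t.
    by rewrite KC; apply/negP.
  move: E2 Hne; case: (connect _ _ s); case: (connect _ _ t) => //= -> _; ring.
split.
  move=> Hc Hlt; have [E1 Rige] := NB Hc.
  have Hc0 : 0 < (Li - Li') / ((Li + Ri) * (Li' + Ri)).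
    apply: divr_gt0; first lra.
    apply: mulr_gt0; lra.
  split; first by rewrite E1 lerDl; apply: mulr_ge0; [exact: ltW | exact: sqr_ge0].
  rewrite E1; split => [H|H].
    have : (Li - Li') / ((Li + Ri) * (Li' + Ri)) * (jr s - jr t) ^+ 2 = 0.
      by apply: (addrI (r' s t)); rewrite addr0.
    move/eqP; rewrite mulf_eq0 (gt_eqF Hc0) /= sqrf_eq0 subr_eq0 => /eqP //.
  by rewrite H subrr expr2 mulr0 mulr0 addr0.
move=> Hnc Hlt; have E2 := BR Hnc.
case Hst: (connect (adj p q A') s t).
  have Heq : connect (adj p q A') (p ei) s = connect (adj p q A') (p ei) t.
    by apply/eqP; rewrite KC.
  rewrite E2 Heq subrr expr2 mulr0 mulr0 addr0; split => //.
have Hne : connect (adj p q A') (p ei) s != connect (adj p q A') (p ei) t.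
  by rewrite KC Hst.
have E3 : r' s t = r s t + (Li' - Li).
  by move: E2 Hne; case: (connect _ _ s); case: (connect _ _ t) => //= -> _; ring.
rewrite E3; split; first lra.
split => // H; exfalso; lra.
Qed.
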